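(* Let $C$ be a cycle (oriented or not) and let $Ck$ be a diagram obtained from $C$ by adding a new vertex $k$ adjacent to some vertices of $C$. Let $A$ be a quasi-Cartan companion of $Ck$ with $\prod_{\{i,j\}\in C}(-A_{ij})<0$. Suppose $k$ is adjacent to an even number of vertices of $C$, and among them there are two vertices that are not adjacent in $C$. Then $Ck$ contains a cycle $C'$ containing $k$ with $\prod_{\{i,j\}\in C'}(-A_{ij})>0$.
   Context: A diagram is a finite directed graph without loops or 2-cycles with positive integer edge weights such that the product of weights along each cycle is a perfect square; a cycle is an induced subgraph on $r\ge3$ vertices whose underlying graph is a cycle. A quasi-Cartan matrix is an integer matrix $A$ with diagonal entries $2$ such that $DA$ is symmetric for a diagonal $D$ with positive entries (so $\mathrm{sgn}A_{ij}=\mathrm{sgn}A_{ji}$). A quasi-Cartan companion of a diagram $\Gamma$ is a quasi-Cartan $A$ with $|A_{ij}|=|B_{ij}|$ ($i\ne j$) for a skew-symmetrizable $B$ whose diagram ($i\to j$ iff $B_{ij}>0$, weight $|B_{ij}B_{ji}|$) is $\Gamma$. *)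

(* Defs.v *)
From HB Require Import structures.
From mathcomp Require Import all_boot all_order all_algebra.
Set Implicit Arguments. Unset Strict Implicit. Unset Printing Implicit Defensive.
Import Order.TTheory GRing.Theory Num.Theory.
Local Open Scope ring_scope.

Definition skew_symmetrizable (n : nat) (B : 'M[int]_n) : Prop :=
  exists d : 'I_n -> int, (forall i, 0 < d i) /\
    (forall i j, d i * B i j = - (d j * B j i)).

Definition adj (n : nat) (B : 'M[int]_n) (i j : 'I_n) : bool :=
  (i != j) && (B i j != 0).

Definition is_cycle (n : nat) (B : 'M[int]_n) (S : {set 'I_n}) : Prop :=
  exists s : seq 'I_n,
    [/\ uniq s, (3 <= size s)%N, S = [set x in s] &
        forall i j, i \in S -> j \in S ->
          adj B i j = (j == next s i) || (i == next s j)].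

Definition quasi_cartan (n : nat) (A : 'M[int]_n) : Prop :=
  (forall i, A i i = 2) /\
  exists d : 'I_n -> int, (forall i, 0 < d i) /\
    (forall i j, d i * A i j = d j * A j i).

Definition qc_companion (n : nat) (B A : 'M[int]_n) : Prop :=
  quasi_cartan A /\ forall i j, i != j -> `|A i j| = `|B i j|.

Definition edge_prod (n : nat) (B A : 'M[int]_n) (S : {set 'I_n}) : int :=
  \prod_(i in S) \prod_(j in S | ((val i < val j)%N && adj B i j)) (- A i j).

(* Main.v *)
From Stdlib Require Import Classical Lia.
Require Import Defs.
From HB Require Import structures.
From mathcomp Require Import all_boot all_order all_algebra.
Set Implicit Arguments. Unset Strict Implicit. Unset Printing Implicit Defensive.
Import Order.TTheory GRing.Theory Num.Theory.

Lemma next_nth_uniq (T : eqType) (s : seq T) x0 i :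
  uniq s -> (i < size s)%N -> next s (nth x0 s i) = nth x0 s (i.+1 %% size s).
Proof.
case: s => [|y p] // Us lti.
rewrite next_nth mem_nth // index_uniq //.
move: lti; rewrite /= ltnS leq_eqVlt => /orP[/eqP->|lt].
  by rewrite modnn /= nth_default.
by rewrite modn_small /= ?ltnS // (set_nth_default x0).
Qed.

Lemma next_neq (T : eqType) (s : seq T) x :
  uniq s -> (3 <= size s)%N -> x \in s ->
  next s x != x /\ next s (next s x) != x.
Proof.
move=> Us s3 xs; have s0 : (0 < size s)%N by apply: leq_trans s3.
rewrite -(nth_index x xs); set i := index x s.
have ilt : (i < size s)%N by rewrite index_mem.
rewrite !next_nth_uniq // ?ltn_pmod //.
rewrite !nth_uniq // ?ltn_pmod //; split.
- apply/negP => /eqP h.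
  have : (i.+1 == i %[mod size s]) by rewrite h modn_small.
  rewrite -addn1 -{2}[i]addn0 eqn_modDl mod0n modn_small ?(leq_trans _ s3) //.
- apply/negP => /eqP h.
  have : (i + 2 == i %[mod size s]).
    have e : (i + 2) %% size s = i.
      by rewrite -[RHS]h -[(i.+1 %% _).+1]addn1 modnDml addn1 addn2.
    by rewrite e modn_small.
  rewrite -{2}[i]addn0 eqn_modDl mod0n modn_small ?(leq_trans _ s3) //.
Qed.

Lemma next_index (T : eqType) (d : seq T) x0 p :
  uniq d -> (p < size d)%N ->
  next d (nth x0 d p) = nth x0 d (if p.+1 == size d then 0 else p.+1).
Proof.
move=> Ud lt; rewrite next_nth_uniq //; case: eqP => [->|ne]; first by rewrite modnn.
by rewrite modn_small // ltn_neqAle; apply/andP; split; [apply/eqP|].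
Qed.

Lemma eq_next_index (T : eqType) (d : seq T) x0 p q :
  uniq d -> (p < size d)%N -> (q < size d)%N ->
  (nth x0 d q == next d (nth x0 d p)) = (q == if p.+1 == size d then 0 else p.+1).
Proof.
move=> Ud lp lq; rewrite next_index //.
case: (p.+1 =P size d) => [e|ne] /=; rewrite nth_uniq //; first by apply: leq_ltn_trans lp.
by rewrite ltn_neqAle; apply/andP; split; [apply/eqP|].
Qed.

Definition cyc_seq n (B : 'M[int]_n) (k : 'I_n) (c : seq 'I_n) :=
  [/\ uniq c, (3 <= size c)%N, k \notin c &
      forall x y, x \in c -> y \in c -> adj B x y = (y == next c x) || (x == next c y)].

Definition wi n (k : 'I_n) (c : seq 'I_n) j := nth k c (j %% size c).

Lemma wi_in n (k : 'I_n) c j : (0 < size c)%N -> wi k c j \in c.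
Proof. by move=> s0; rewrite /wi mem_nth // ltn_pmod. Qed.

Lemma wi_next n (k : 'I_n) c j : uniq c -> (0 < size c)%N ->
  next c (wi k c j) = wi k c j.+1.
Proof.
move=> Uc s0; rewrite /wi next_nth_uniq ?ltn_pmod //.
by rewrite -addn1 modnDml addn1.
Qed.

Lemma wi_eq n (k : 'I_n) c i j : uniq c -> (0 < size c)%N ->
  (wi k c i == wi k c j) = (i == j %[mod size c]).
Proof. by move=> Uc s0; rewrite /wi nth_uniq ?ltn_pmod. Qed.

Lemma wi_adj n (B : 'M[int]_n) k c i j : cyc_seq B k c ->
  adj B (wi k c i) (wi k c j) =
  (j == i.+1 %[mod size c]) || (i == j.+1 %[mod size c]).
Proof.
case=> Uc c3 kc Hc; have s0 : (0 < size c)%N by apply: leq_trans c3.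
by rewrite Hc ?wi_in // !wi_next // !wi_eq.
Qed.

Lemma window_inj (r i j : nat) : (i <= j)%N -> (j - i < r)%N ->
  (i == j %[mod r]) -> i = j.
Proof.
move=> ij jr; rewrite -(subnKC ij) -{1}[i]addn0 eqn_modDl mod0n modn_small //.
by move=> /eqP <-; rewrite addn0.
Qed.

Lemma wi_in_inv n (k : 'I_n) c x : x \in c -> exists2 i, (i < size c)%N & x = wi k c i.
Proof.
move=> xc; exists (index x c); first by rewrite index_mem.
by rewrite /wi modn_small ?index_mem // nth_index.
Qed.

Local Open Scope ring_scope.

Lemma sgz_prod (I : Type) (r : seq I) (P : pred I) (F : I -> int) :
  sgz (\prod_(i <- r | P i) F i) = \prod_(i <- r | P i) sgz (F i).
Proof. exact: (big_morph (sgz (R:=int)) (@sgzM _) (sgz1 _)). Qed.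

Lemma edge_sign n (B A : 'M[int]_n) (d : seq 'I_n) :
  (forall x y, sgz (A x y) = sgz (A y x)) ->
  uniq d -> (3 <= size d)%N ->
  (forall x y, x \in d -> y \in d ->
     adj B x y = (y == next d x) || (x == next d y)) ->
  sgz (edge_prod B A [set x in d]) = \prod_(x <- d) sgz (- A x (next d x)).
Proof.
move=> Asym Ud d3 Hadj.
pose h x y := if (val x < val y)%N then sgz (- A x y) else 1.
rewrite /edge_prod sgz_prod.
have inner : forall x, x \in d ->
   sgz (\prod_(j in [set x in d] | (val x < val j)%N && adj B x j) - A x j)
   = h x (next d x) * h x (prev d x).
  move=> x xd; rewrite sgz_prod big_mkcond /=.
  have [n1 n2] := next_neq Ud d3 xd.
  have npx : next d x != prev d x.
    apply: contra n2 => /eqP ->; by rewrite next_prev.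
  have pnx : prev d x != next d x by rewrite eq_sym.
  rewrite (bigD1 (next d x)) //= (bigD1 (prev d x)) //=. rewrite [X in _ * (_ * X)]big1 ?mulr1.
  - rewrite !inE mem_next mem_prev xd /=.
    rewrite Hadj ?mem_next ?mem_prev // eqxx /= (Hadj x (prev d x)) ?mem_prev //.
    rewrite next_prev // eqxx orbT !andbT /h.
    by case: ifP; case: ifP.
  - move=> j /andP[jn jp]; rewrite !inE; case: ifP => // /andP[jd /andP[_ aj]].
    move: aj; rewrite Hadj // (negbTE jn) /=.
    move=> /eqP xe; move: jp; by rewrite xe prev_next // eqxx.
rewrite (eq_bigr (fun x => h x (next d x) * h x (prev d x))); last first.
  by move=> x; rewrite inE => xd; apply: inner.
rewrite big_split /=.
have Hperm : perm_eq d (map (next d) d).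
  apply: uniq_perm => //; first by rewrite map_inj_uniq //; apply: (can_inj (prev_next Ud)).
  move=> y; apply/idP/idP => [yd|/mapP[z zd ->]]; last by rewrite mem_next.
  by apply/mapP; exists (prev d y); rewrite ?mem_prev // next_prev.
rewrite [X in _ * X](eq_bigl (fun x => x \in d)); last by move=> x; rewrite inE.
rewrite -big_uniq // (perm_big _ Hperm) big_map.
rewrite [X in X * _](eq_bigl (fun x => x \in d)); last by move=> x; rewrite inE.
rewrite -big_uniq // -big_split /=.
apply: eq_big_seq => x xd; rewrite prev_next //.
have [n1 _] := next_neq Ud d3 xd.
rewrite /h; case: ltngtP => [||/val_inj e]; rewrite ?mulr1 ?mul1r //.
- by rewrite !sgzN Asym.
- by rewrite -e eqxx in n1.
Qed.

Lemma arc_cycle n (B A : 'M[int]_n) (k : 'I_n) (c : seq 'I_n) (a b : nat) :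
  cyc_seq B k c ->
  (forall x y, adj B x y = adj B y x) ->
  (a < b)%N -> ((b - a).+2 <= size c)%N ->
  adj B k (wi k c a) -> adj B k (wi k c b) ->
  (forall j, (a < j < b)%N -> ~~ adj B k (wi k c j)) ->
  let d := k :: [seq wi k c j | j <- iota a (b - a).+1] in
  [/\ uniq d, (3 <= size d)%N,
      (forall x y, x \in d -> y \in d -> adj B x y = (y == next d x) || (x == next d y)) &
      \prod_(x <- d) sgz (- A x (next d x)) =
      sgz (- A k (wi k c a)) * (\prod_(a <= j < b) sgz (- A (wi k c j) (wi k c j.+1)))
        * sgz (- A (wi k c b) k)].
Proof.
move=> Hcyc asym ab brr Na Nb Nmid d.
have [Uc c3 kc Hc] := Hcyc.
have s0 : (0 < size c)%N by apply: leq_trans c3.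
set m := (b - a).+1.
have mr : (m < size c)%N by [].
have bam : b = (a + m.-1)%N by rewrite /m succnK subnKC // ltnW.
have sd : size d = m.+1 by rewrite /d /= size_map size_iota.
have nth0 : nth k d 0 = k by [].
have nthS : forall t, (t < m)%N -> nth k d t.+1 = wi k c (a + t)%N.
  move=> t tm; change (nth k [seq wi k c j | j <- iota a m] t = wi k c (a + t)%N).
  by rewrite (nth_map 0%N) ?size_iota // nth_iota.
have Ud : uniq d.
  rewrite /d cons_uniq map_inj_in_uniq ?iota_uniq ?andbT.
    by apply/negP => /mapP[j _ e]; move: kc; rewrite e wi_in.
  move=> i j; rewrite !mem_iota => /andP[ai ia] /andP[aj ja] /eqP.
  rewrite wi_eq //.
  wlog ij : i j ai ia aj ja / (i <= j)%N.
    by move=> H; case: (leqP i j) => [|/ltnW] h e; [|apply/esym]; apply: H => //; rewrite eq_sym.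
  apply: window_inj => //; apply: leq_ltn_trans mr.
  rewrite leq_subLR -ltnS -addnS (leq_trans ja) // -/m; exact: leq_add.
have d3 : (3 <= size d)%N by rewrite sd /m !ltnS subn_gt0.
have key : forall t u, (t < m)%N -> (u < m)%N ->
    ((a + u)%N == (a + t).+1 %[mod size c]) = (u == t.+1).
  move=> t u tm um; rewrite -addnS eqn_modDl !modn_small //.
  - exact: leq_ltn_trans tm mr.
  - exact: ltn_trans um mr.
have key2 : forall t u, (t < m)%N -> (u < m)%N ->
    (u.+1 == if t.+2 == m.+1 then 0 else t.+2) = (u == t.+1).
  move=> t u tm um; case: (t.+2 =P m.+1) => [e|_] /=; last by [].
  apply/esym/negbTE/eqP => ue; move: um; by rewrite ue -ltnS e ltnn.
  have mid : forall u, (u < m)%N -> adj B k (wi k c (a + u)) = (u == 0%N) || (u.+1 == m).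
    move=> v vm; case: (v =P 0%N) => [->|v0]; first by rewrite addn0 Na.
    case: (v.+1 =P m) => [e|vm1] /=.
      by have -> : (a + v)%N = b by rewrite bam -e.
    apply/negbTE/Nmid; rewrite -{1}[a]addn0 ltn_add2l lt0n; apply/andP; split; first by apply/eqP.
    rewrite bam ltn_add2l -ltnS prednK //; rewrite ltn_neqAle; apply/andP; split => //.
    by apply/eqP.
  have rhs : forall u, (u < m)%N -> (0%N == (if u.+2 == m.+1 then 0%N else u.+2)) = (u.+1 == m).
    move=> v vm; case: (v.+2 =P m.+1) => [[e]|ne] /=; [by rewrite e !eqxx | ].
    by apply/esym/negbTE/eqP => e; apply: ne; rewrite e.
split => //.
- move=> x y xd yd.
  rewrite -(nth_index k xd) -(nth_index k yd).
  have := index_mem x d; rewrite xd => lx.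
  have := index_mem y d; rewrite yd => ly.
  rewrite !eq_next_index //.
  move: lx ly; rewrite sd.
  case: (index x d) => [|t] lx; case: (index y d) => [|u] ly.
  + by rewrite nth0 /adj eqxx.
  + rewrite nth0 nthS //=; rewrite !ltnS in ly.
    by rewrite mid // eqSS rhs.
  + rewrite nth0 nthS // asym mid //; rewrite !ltnS in lx.
    by rewrite orbC eqSS rhs.
  + rewrite !ltnS in lx ly; rewrite !nthS // wi_adj //.
    by rewrite (key t u) // (key u t) // (key2 t u) // (key2 u t).
- have nk : next d k = wi k c a.
    by rewrite -nth0 next_index // sd /= nthS // addn0.
  have nw : forall t, (t < m)%N ->
      next d (wi k c (a + t)) = if t.+1 == m then k else wi k c (a + t).+1.
    move=> t tm; rewrite -nthS // next_index ?sd ?ltnS //.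
    case: (t.+2 =P m.+1) => [[e]|ne]; first by rewrite /= e eqxx.
    have tm' : (t.+1 < m)%N by rewrite ltn_neqAle tm andbT; apply/eqP => e; apply: ne; rewrite e.
    have c1 : (t.+2 == m.+1) = false by apply/eqP.
    have c2 : (t.+1 == m) = false by apply/eqP => e; apply: ne; rewrite e.
    by rewrite c2 nthS // addnS.
  rewrite {1}/d big_cons big_map nk -mulrA; congr (_ * _).
  rewrite -[(b - a).+1]addn1.
  rewrite iotaD big_cat [iota _ 1]/= big_seq1 subnKC ?(ltnW ab) //.
  congr (_ * _).
    apply: eq_big_seq => j; rewrite mem_iota subnKC ?(ltnW ab) // => /andP[aj jb].
    rewrite -(subnKC aj) nw; last by rewrite /m ltnS leq_sub2r // ltnW.
    rewrite ifN //; rewrite /m eqSS; apply/negP => /eqP e.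
    by move: jb; rewrite -(subnKC aj) e subnKC ?(ltnW ab) // ltnn.
  by rewrite bam nw ?prednK // eqxx.
Qed.

Lemma pm1 (x : int) : x * x = 1 -> x = 1 \/ x = -1.
Proof.
move=> h; have : x ^+ 2 == 1 by rewrite expr2 h.
by rewrite sqrf_eq1 => /orP[/eqP|/eqP]; [left|right].
Qed.

Lemma solve3 (x y z : int) : x * x = 1 -> z * z = 1 -> x * y * z = -1 -> y = - (x * z).
Proof.
move=> /pm1[]-> /pm1[]->; rewrite ?mul1r ?mulr1 ?mulN1r ?mulrN1 ?opprK //.
- by move=> /eqP; rewrite eqr_opp => /eqP.
- by move=> /eqP; rewrite eqr_opp => /eqP.
Qed.

Lemma sq_prod (I : Type) (r : seq I) (P : pred I) (F : I -> int) :
  (forall i, P i -> F i * F i = 1) -> (\prod_(i <- r | P i) F i) * (\prod_(i <- r | P i) F i) = 1.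
Proof.
move=> H; elim/big_rec: _ => [|i x Pi Hx]; first by rewrite mulr1.
by rewrite mulrACA H // Hx mulr1.
Qed.

Lemma solve3' (x y z : int) : x * x = 1 -> y * y = 1 -> z * z = 1 -> x * y * z != 1 -> y = - (x * z).
Proof.
by move=> /pm1[]-> /pm1[]-> /pm1[]->; rewrite ?mul1r ?mulr1 ?mulN1r ?mulrN1 ?opprK // eqxx.
Qed.

Lemma fin3 (x y z : int) : x * x = 1 -> y * y = 1 -> z * z = 1 ->
  x * y = - z -> -1 = y * - (x * z) -> False.
Proof.
by move=> /pm1[]-> /pm1[]-> /pm1[]->; rewrite ?mul1r ?mulr1 ?mulN1r ?mulrN1 ?opprK //.
Qed.

Lemma alg1 (x y z : int) : x * (y * -(z * x)) = - ((x * x) * (z * y)).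
Proof.
rewrite !mulrN; congr (- _).
rewrite -!mulrA; congr (x * _); by rewrite mulrCA [RHS]mulrCA [y * x]mulrC.
Qed.

Lemma core n (B A : 'M[int]_n) (k : 'I_n) (c : seq 'I_n) :
  cyc_seq B k c ->
  (forall x y, adj B x y -> sgz (- A x y) * sgz (- A x y) = 1) ->
  adj B k (wi k c 0) ->
  \prod_(0 <= i < size c) sgz (- A (wi k c i) (wi k c i.+1)) = -1 ->
  ~~ odd (\sum_(0 <= i < size c) adj B k (wi k c i)) ->
  (forall u v, (u < size c)%N -> (v < size c)%N -> (u = v \/ adj B (wi k c u) (wi k c v)) ->
     (forall i, (i < size c)%N -> adj B k (wi k c i) -> i = u \/ i = v) -> False) ->
  exists a b, [/\ (a < b)%N, ((b - a).+2 <= size c)%N, adj B k (wi k c a), adj B k (wi k c b) &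
     (forall j, (a < j < b)%N -> ~~ adj B k (wi k c j))] /\
     sgz (- A k (wi k c a)) * (\prod_(a <= j < b) sgz (- A (wi k c j) (wi k c j.+1)))
        * sgz (- A k (wi k c b)) = 1.
Proof.
move=> Hcyc Hsq N0 Hneg Heven Htwo.
have [Uc c3 kc Hc] := Hcyc.
set r := size c in Hneg Heven Htwo *.
have r0 : (0 < r)%N by apply: leq_trans c3.
pose N j := adj B k (wi k c j).
pose e j := sgz (- A (wi k c j) (wi k c j.+1)).
pose eps j := sgz (- A k (wi k c j)).
pose Q j := \prod_(0 <= i < j) e i.
pose cnt j := (\sum_(0 <= i < j) N i)%N.
have esq : forall j, e j * e j = 1.
  by move=> j; apply: Hsq; rewrite wi_adj // eqxx.
have epsq : forall j, N j -> eps j * eps j = 1 by move=> j; apply: Hsq.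
apply: NNPP => Hno.
have arc : forall a b, (a < b)%N -> ((b - a).+2 <= r)%N -> N a -> N b ->
     (forall j, (a < j < b)%N -> ~~ N j) ->
     \prod_(a <= j < b) e j = - (eps a * eps b).
  move=> a b ab bar Na Nb mid; apply: solve3'; rewrite ?epsq //.
    exact: sq_prod.
  apply/negP => /eqP h; apply: Hno; exists a, b; split; [by split | exact: h].
have Q0 : Q 0%N = 1 by rewrite /Q big_geq.
have cnt0 : cnt 0%N = 0%N by rewrite /cnt big_geq.
have Qsplit : forall p a, (p <= a)%N -> Q a = Q p * \prod_(p <= j < a) e j.
  by move=> p a pa; rewrite /Q (big_cat_nat (leq0n p) pa).
have cntsplit : forall p a, (p < a)%N -> N p -> (forall j, (p < j < a)%N -> ~~ N j) ->
    cnt a = (cnt p).+1.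
  move=> p a pa Np mid; rewrite /cnt (big_cat_nat (leq0n p) (ltnW pa)).
  have S0 : (\sum_(p.+1 <= i < a) N i)%N = 0%N.
    rewrite big_nat_cond big1 // => j /andP[/andP[pj ja] _].
    by rewrite (negbTE (mid j _)) ?pj.
  by rewrite (big_ltn pa) S0 Np /= addn0 addn1.
have lastN : forall a, (0 < a)%N -> exists p, [/\ (p < a)%N, N p & forall j, (j < a)%N -> N j -> (j <= p)%N].
  move=> a a0.
  have ex : exists i, (i < a)%N && N i by exists 0%N; rewrite a0.
  have ub : forall i, (i < a)%N && N i -> (i <= a)%N by move=> i /andP[/ltnW].
  case: (ex_maxnP ex ub) => p /andP[pa Np] mx; exists p; split => // j ja Nj.
  by apply: mx; rewrite ja.
have Qsq : forall a, Q a * Q a = 1 by move=> a; apply: sq_prod.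
have claim : forall a, (a < r)%N -> N a -> eps a * Q a = (-1) ^+ (cnt a) * eps 0%N.
  elim/ltn_ind => a IH ar Na.
  case: (posnP a) => [->|a0]; first by rewrite Q0 cnt0 mulr1 mul1r.
  have [p [pa Np mx]] := lastN a a0.
  have mid : forall j, (p < j < a)%N -> ~~ N j.
    move=> j /andP[pj ja]; apply/negP => Nj; have := mx j ja Nj.
    by rewrite leqNgt pj.
  case: (leqP ((a - p).+2) r) => bar; last first.
    have [hp ha] : p = 0%N /\ a = r.-1.
      move: bar ar pa => /ssrnat.ltP bar /ssrnat.ltP ar /ssrnat.ltP pa.
      rewrite ?subnE in bar; lia.
    exfalso; apply: (Htwo 0%N r.-1) => //.
    - by rewrite prednK // leqnn.
    - right; rewrite wi_adj // prednK // modnn mod0n eqxx orbT //.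
    - move=> i ir Ni; case: (ltnP i a) => ia.
        by left; apply/eqP; rewrite -leqn0 -hp; apply: mx.
      right; apply/eqP; rewrite eqn_leq -ha ia andbT -ltnS ha prednK //.
  rewrite (Qsplit p a (ltnW pa)) (arc p a) // (cntsplit p a) // exprS.
  rewrite alg1 epsq // mul1r (IH p) //; last by apply: ltn_trans ar.
  by rewrite mulN1r mulNr.
have [p [pr Np mx]] := lastN r r0.
have mid : forall j, (p < j < r)%N -> ~~ N j.
  move=> j /andP[pj jr]; apply/negP => Nj; have := mx j jr Nj.
  by rewrite leqNgt pj.
have wir : wi k c r = wi k c 0%N by rewrite /wi modnn mod0n.
have Nr : N r by rewrite /N wir.
case: (leqP p 1%N) => p1.
  apply: (Htwo 0%N 1%N) => //.
  - by apply: leq_trans c3.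
  - by right; rewrite wi_adj // !modn_small ?eqxx // (leq_trans _ c3).
  - move=> i ir Ni; have := leq_trans (mx i ir Ni) p1.
    by case: i {ir Ni} => [|[|i]] //; [left|right].
have bar : ((r - p).+2 <= r)%N.
  move: p1 pr => /ssrnat.ltP p1 /ssrnat.ltP pr; apply/ssrnat.leP; rewrite ?subnE; lia.
have Hq : Q r = -1 := Hneg.
have Hev : ~~ odd (cnt r) := Heven.
rewrite (cntsplit p r) // /= in Hev; rewrite negbK in Hev.
have Hcl := claim p pr Np.
rewrite -signr_odd Hev expr1 mulN1r in Hcl.
rewrite (Qsplit p r (ltnW pr)) (arc p r) // /eps wir -/(eps 0%N) in Hq.
by apply: (fin3 (epsq p Np) (Qsq p) (epsq 0%N N0) Hcl); rewrite Hq.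
Qed.

Lemma prod_wi n (k : 'I_n) (c : seq 'I_n) (R : Type) (idx : R) (op : Monoid.law idx) (F : 'I_n -> R) :
  \big[op/idx]_(x <- c) F x = \big[op/idx]_(0 <= i < size c) F (wi k c i).
Proof.
rewrite -{1}(mkseq_nth k c) /mkseq big_map /index_iota subn0.
by apply: eq_big_seq => i; rewrite mem_iota add0n => /andP[_ ic]; rewrite /wi modn_small.
Qed.

Unset Implicit Arguments.
Theorem mainTheorem14 (n : nat) (B A : 'M[int]_n) (k : 'I_n) :
  skew_symmetrizable B ->
  is_cycle B [set~ k] ->
  qc_companion B A ->
  edge_prod B A [set~ k] < 0 ->
  ~~ odd #|[set i in [set~ k] | adj B k i]| ->
  (exists i j, [/\ i \in [set~ k], j \in [set~ k], i != j,
                   adj B k i & adj B k j] /\ ~~ adj B i j) ->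
  exists C' : {set 'I_n},
    [/\ k \in C', is_cycle B C' & 0 < edge_prod B A C'].
Proof.
move=> [dB [dBpos HdB]] [s [Us s3 Ss Hs]] [[A2 [dA [dApos HdA]]] Habs] Hneg Heven
  [x0 [y0 [[x0S y0S xy0 Nx0 Ny0] nxy0]]].
have adjsym : forall x y, adj B x y = adj B y x.
  move=> x y; rewrite /adj eq_sym; congr (_ && _).
  have := HdB x y; case: (B x y =P 0) => [->|nz]; case: (B y x =P 0) => [->|nz'] //=.
  - by rewrite mulr0 => /eqP; rewrite eq_sym oppr_eq0 mulf_eq0 (gt_eqF (dBpos y)) /= => /eqP /nz'.
  - by rewrite mulr0 oppr0 => /eqP; rewrite mulf_eq0 (gt_eqF (dBpos x)) /= => /eqP /nz.
have Asym : forall x y, sgz (A x y) = sgz (A y x).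
  move=> x y; have := congr1 (sgz (R:=int)) (HdA x y).
  by rewrite !sgzM (gtr0_sgz (dApos x)) (gtr0_sgz (dApos y)) !mul1r.
have Anz : forall x y, adj B x y -> A x y != 0.
  move=> x y /andP[xy Bxy]; rewrite -normr_eq0 Habs // normr_eq0 //.
have Hsq : forall x y, adj B x y -> sgz (- A x y) * sgz (- A x y) = 1.
  by move=> x y axy; rewrite mulz_sg oppr_eq0 Anz.
have memS : forall x, (x \in [set~ k]) = (x \in s) by move=> x; rewrite Ss inE.
have kS : k \notin s by rewrite -memS setC11.
have x0s : x0 \in s by rewrite -memS.
set i0 := index x0 s.
set c := rot i0 s.
have Uc : uniq c by rewrite rot_uniq.
have c3 : (3 <= size c)%N by rewrite size_rot.
have Hc : forall x y, x \in c -> y \in c -> adj B x y = (y == next c x) || (x == next c y).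
  by move=> x y; rewrite !mem_rot -!memS => xs ys; rewrite !next_rot // Hs.
have Hcyc : cyc_seq B k c by split => //; rewrite mem_rot.
have W0 : wi k c 0%N = x0.
  rewrite /wi mod0n /c /rot nth_cat size_drop subn_gt0 index_mem x0s.
  by rewrite nth_drop addn0 nth_index.
have N0 : adj B k (wi k c 0%N) by rewrite W0.
have setc : [set~ k] = [set x in c] by apply/setP => x; rewrite memS inE mem_rot.
have Hneg' : \prod_(0 <= i < size c) sgz (- A (wi k c i) (wi k c i.+1)) = -1.
  have := ltr0_sgz Hneg; rewrite setc (edge_sign Asym Uc c3 Hc) (prod_wi k) => <-.
  apply: eq_bigr => i _; rewrite wi_next //; exact: leq_trans c3.
have Heven' : ~~ odd (\sum_(0 <= i < size c) adj B k (wi k c i)).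
  rewrite -(prod_wi k c _ (fun x => nat_of_bool (adj B k x))).
  suff -> : (\sum_(x <- c) adj B k x)%N = #|[set i in [set~ k] | adj B k i]| by [].
  rewrite big_uniq // -sum1_card.
  rewrite [RHS](eq_bigl (fun i => (i \in c) && adj B k i)); last by move=> i; rewrite inE setc inE.
  by rewrite big_mkcondr; apply: eq_bigr => i _; case: (adj B k i).
have Htwo : forall u v, (u < size c)%N -> (v < size c)%N ->
    (u = v \/ adj B (wi k c u) (wi k c v)) ->
    (forall i, (i < size c)%N -> adj B k (wi k c i) -> i = u \/ i = v) -> False.
  move=> u v ur vr Huv Hall.
  have x0c : x0 \in c by rewrite mem_rot -memS.
  have y0c : y0 \in c by rewrite mem_rot -memS.
  have [a ar ea] := wi_in_inv k x0c.
  have [b br eb] := wi_in_inv k y0c.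
  have Na : adj B k (wi k c a) by rewrite -ea.
  have Nb : adj B k (wi k c b) by rewrite -eb.
  have nab : ~~ adj B (wi k c a) (wi k c b) by rewrite -ea -eb.
  have ab : a != b by apply/eqP => e; move: xy0; rewrite ea eb e eqxx.
  move: ab nab; case: (Hall a ar Na) => ->; case: (Hall b br Nb) => ->; rewrite ?eqxx //;
    case: Huv => [->|h]; rewrite ?eqxx ?h //.
  by rewrite adjsym h.
have [a [b [[ab bar Na Nb mid] Hsgn]]] := core Hcyc Hsq N0 Hneg' Heven' Htwo.
have [Ud d3 Hd Hprod] := arc_cycle A Hcyc adjsym ab bar Na Nb mid.
exists [set x in k :: [seq wi k c j | j <- iota a (b - a).+1]]; split.
- by rewrite inE mem_head.
- by exists (k :: [seq wi k c j | j <- iota a (b - a).+1]); split => // x y; rewrite !inE; apply: Hd.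
- rewrite -sgz_gt0 (edge_sign Asym Ud d3 Hd) Hprod.
  have -> : sgz (- A (wi k c b) k) = sgz (- A k (wi k c b)) by rewrite !sgzN Asym.
  by rewrite Hsgn.
Qed.
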